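(* Let $\mathcal{M},\mathcal{N}\in\mathbb{N}$ and let $\boldsymbol{L}\in\mathbb{R}^{\mathcal{M}\times\mathcal{N}}$ be such that, for each $i=1,\dots,\mathcal{M}$, the entries $L_{i1},\dots,L_{i\mathcal{N}}$ together with $1$ are linearly independent over $\mathbb{Q}$. Let $\varepsilon,T>0$ and $\boldsymbol{Q}\in[1,+\infty)^{\mathcal{N}}$. Then for each $i=1,\dots,\mathcal{M}$, $$\#\big(\Lambda_{\boldsymbol{L}}\cap Z^i\big)\ll_{\mathcal{M}}(1+T)^{\mathcal{M}},$$ with implied constant depending only on $\mathcal{M}$.
   Context: $\Lambda_{\boldsymbol{L}}:=\{(L_1\boldsymbol{q}+p_1,\dots,L_{\mathcal{M}}\boldsymbol{q}+p_{\mathcal{M}},\boldsymbol{q}):\boldsymbol{p}\in\mathbb{Z}^{\mathcal{M}},\boldsymbol{q}\in\mathbb{Z}^{\mathcal{N}}\}\subset\mathbb{R}^{\mathcal{M}+\mathcal{N}}$, where $L_i\boldsymbol{q}=\sum_jL_{ij}q_j$. Let $H:=\{\boldsymbol{x}\in\mathbb{R}^{\mathcal{M}}:\prod_{i=1}^{\mathcal{M}}|x_i|<\varepsilon,\ |x_i|\le T\ (i=1,\dots,\mathcal{M})\}$, $H^i:=H\cap\{x_i=0\}$, and $Z^i:=H^i\times\prod_{j=1}^{\mathcal{N}}[-Q_j,Q_j]$. *)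

(* Defs.v *)
From HB Require Import structures.
From mathcomp Require Import all_boot all_order all_algebra.
From mathcomp Require Import reals.
Set Implicit Arguments. Unset Strict Implicit. Unset Printing Implicit Defensive.
Import Order.TTheory GRing.Theory Num.Theory.
Local Open Scope ring_scope.

Definition row_Q_indep1 (R : realType) (M N : nat) (L : 'M[R]_(M, N)) (i : 'I_M) : Prop :=
  forall (a : 'I_N -> rat) (b : rat),
    \sum_(j < N) ratr (a j) * L i j + ratr b = 0 ->
    (forall j, a j = 0) /\ b = 0.

Definition Lambda (R : realType) (M N : nat) (L : 'M[R]_(M, N)) : 'rV[R]_(M + N) -> Prop :=
  fun v => exists (p : 'I_M -> int) (q : 'I_N -> int),
      v = row_mx (\row_(k < M) (\sum_(j < N) L k j * (q j)%:~R + (p k)%:~R))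
                 (\row_(j < N) (q j)%:~R).

Definition Hset (R : realType) (M : nat) (eps T : R) (x : 'rV[R]_M) : bool :=
  (\prod_(k < M) `|x ord0 k| < eps) && [forall k, `|x ord0 k| <= T].

Definition Hiset (R : realType) (M : nat) (eps T : R) (i : 'I_M) (x : 'rV[R]_M) : bool :=
  Hset eps T x && (x ord0 i == 0).

Definition Zset (R : realType) (M N : nat) (eps T : R) (Q : 'I_N -> R) (i : 'I_M)
    (v : 'rV[R]_(M + N)) : bool :=
  Hiset eps T i (lsubmx v) && [forall j, `|rsubmx v ord0 j| <= Q j].

(* Main.v *)
Require Import Defs.
From HB Require Import structures.
From mathcomp Require Import all_boot all_order all_algebra.
From mathcomp Require Import reals.
From mathcomp Require Import zify lra.
Import Order.TTheory GRing.Theory Num.Theory.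
Local Open Scope ring_scope.

Lemma key (R : realType) M N (L : 'M[R]_(M, N)) i eps T (Q : 'I_N -> R)
  (HL : row_Q_indep1 L i) v : Lambda L v -> Zset eps T Q i v ->
  exists p : 'I_M -> int, v = row_mx (\row_k (p k)%:~R) 0 /\
     forall k, `|p k| <= Num.floor T.
Proof.
case=> p [q ->]; rewrite /Zset /Hiset /Hset.
move/andP => [/andP [/andP [_ /forallP HT] /eqP Hi] _].
rewrite row_mxKl mxE in Hi.
have [|Hq _] := HL (fun j => (q j)%:Q) (p i)%:Q.
  rewrite -[RHS]Hi ratr_int; congr (_ + _).
  by apply: eq_bigr => j _; rewrite ratr_int mulrC.
have Hq' : forall j, q j = 0.
  by move=> j; have := Hq j; move/eqP; rewrite intr_eq0 => /eqP.
have E : \row_(k < M) (\sum_(j < N) L k j * (q j)%:~R + (p k)%:~R)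
   = \row_k (p k)%:~R.
  apply/rowP => k; rewrite !mxE big1 ?add0r // => j _; by rewrite Hq' mulr0.
exists p; split.
  rewrite E; congr row_mx; apply/rowP => j; by rewrite !mxE Hq'.
move=> k; have := HT k; rewrite row_mxKl E mxE -intr_norm => H.
by rewrite floor_ge_int.
Qed.
Lemma aux1 (a : int) (K : nat) : `|a| <= K%:Z -> (absz (a + K%:Z)%R < K.*2.+1)%N.
Proof. move=> H. lia. Qed.
Lemma aux2 (a b : int) (K : nat) : `|a| <= K%:Z -> `|b| <= K%:Z -> 
  absz (a + K%:Z)%R = absz (b + K%:Z)%R -> a = b.
Proof. move=> *. lia. Qed.

Theorem lemma2p2 :
  forall M : nat, exists C : nat,
  forall (R : realType) (N : nat) (L : 'M[R]_(M, N)),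
    (forall i : 'I_M, row_Q_indep1 L i) ->
  forall (eps T : R), 0 < eps -> 0 < T ->
  forall Q : 'I_N -> R, (forall j, 1 <= Q j) ->
  forall i : 'I_M,
  forall s : seq 'rV[R]_(M + N), uniq s ->
    (forall v, v \in s -> Lambda L v /\ Zset eps T Q i v) ->
    (size s)%:R <= C%:R * (1 + T) ^+ M.
Proof.
move=> M; exists (2 ^ M)%N => R N L HL eps T eps0 T0 Q HQ i s us Hs.
set K := absz (Num.floor T).
have fT : 0 <= Num.floor T by rewrite floor_ge0 ltW.
have KE : (K : int) = Num.floor T by rewrite /K gez0_abs.
pose g (v : 'rV[R]_(M + N)) : {ffun 'I_M -> 'I_(K.*2.+1)} :=
  [ffun k => inord (absz (Num.floor (v ord0 (lshift N k)) + K%:Z)%R)].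
have Hg : {in s &, injective g}.
  move=> v w /Hs [Lv Zv] /Hs [Lw Zw].
  have [p [-> Hp]] := @key R M N L i eps T Q (HL i) v Lv Zv.
  have [p' [-> Hp']] := @key R M N L i eps T Q (HL i) w Lw Zw.
  move/ffunP => E; congr row_mx; apply/rowP => k; rewrite !mxE; congr intr.
  have := E k; rewrite !ffunE !row_mxEl !mxE !intrKfloor.
  move/(congr1 val) => /=; rewrite !inordK; last 2 first.
  - by apply: aux1; rewrite KE.
  - by apply: aux1; rewrite KE.
  by apply: aux2; rewrite KE.
have Hsz : (size s <= (K.*2.+1) ^ M)%N.
  have -> : ((K.*2.+1) ^ M = #|{ffun 'I_M -> 'I_(K.*2.+1)}|)%N by rewrite card_ffun !card_ord.
  rewrite -(size_map g).
  rewrite -(card_uniqP _); last by rewrite map_inj_in_uniq.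
  exact: max_card.
have KT : K%:R <= T by have := floor_le T; rewrite -KE.
apply: (le_trans (y := ((K.*2.+1) ^ M)%:R)); first by rewrite ler_nat.
rewrite !natrX -exprMn; apply: lerXn2r; rewrite ?nnegrE ?ler0n //.
  by rewrite mulr_ge0 ?ler0n // addr_ge0 // ltW.
rewrite -addn1 -muln2 natrD natrM; lra.
Qed.
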